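(* Let $D$ be a Euclidean domain with fraction field $K$. Then $D$ is Bonaccian. More precisely, if $f$ is any Euclidean function on $D$ and $a,b \in D$ are nonzero with $f(a) \leq f(b)$, then $a/b$ is $D$-Egyptian.
   Context: A Euclidean function on an integral domain $D$ is a function $f: D\setminus\{0\} \to \mathbb{Z}$ such that for all nonzero $a,b \in D$: (1) $f(ab) \geq f(a)$, and (2) there exist $q,r \in D$ with $b = aq + r$ and either $r=0$ or $f(r) < f(a)$. A Euclidean domain is an integral domain admitting a Euclidean function. An element of $K$ is $D$-Egyptian if it is a sum of reciprocals of distinct nonzero elements of $D$. $D$ is Bonaccian if for every nonzero $\alpha \in K$, either $\alpha$ or $\alpha^{-1}$ is $D$-Egyptian. *)

(* Defs.v *)
From mathcomp Require Import all_boot all_order all_algebra.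
Set Implicit Arguments. Unset Strict Implicit. Unset Printing Implicit Defensive.
Import Order.TTheory GRing.Theory Num.Theory.
Local Open Scope ring_scope.

Definition toK (D : idomainType) (x : D) : {fraction D} := @FracField.tofrac D x.

(* Euclidean function f : D \ {0} -> Z (values of f at 0 are irrelevant). *)
Definition euclidean_fun (D : idomainType) (f : D -> int) : Prop :=
  (forall a b : D, a != 0 -> b != 0 -> f a <= f (a * b)) /\
  (forall a b : D, a != 0 -> b != 0 ->
     exists q r : D, b = a * q + r /\ (r = 0 \/ f r < f a)).

Definition euclidean_domain (D : idomainType) : Prop :=
  exists f : D -> int, euclidean_fun f.

Definition egyptian (D : idomainType) (alpha : {fraction D}) : Prop :=
  exists s : seq D, uniq s /\ all (fun d => d != 0) s /\
    alpha = \sum_(d <- s) (toK d)^-1.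

Definition bonaccian (D : idomainType) : Prop :=
  forall alpha : {fraction D}, alpha != 0 -> egyptian alpha \/ egyptian alpha^-1.

(* Main.v *)
Require Import Defs.
From Stdlib Require Import Classical.
From mathcomp Require Import all_boot all_order all_algebra.
From mathcomp Require Import zify ring lra.
Set Implicit Arguments. Unset Strict Implicit. Unset Printing Implicit Defensive.
Import Order.TTheory GRing.Theory Num.Theory.
Local Open Scope ring_scope.

Lemma frac_rep (D : idomainType) (x : {fraction D}) :
  exists n d : D, d != 0 /\ x = FracField.tofrac n / FracField.tofrac d.
Proof.
elim/quotW: x => r.
have hd := denom_ratioP r.
exists (\n_r), (\d_r); split; first exact: hd.
rewrite !piE; apply/eqmodP; rewrite /= FracField.equivfE.
rewrite /FracField.mulf /FracField.invf.
rewrite !numden_Ratio ?oner_neq0 // ?mulr1 ?mul1r //.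
by rewrite mulrC.
Qed.

Section A.
Variable D : idomainType.
Variable f : D -> int.
Hypothesis hf : euclidean_fun f.

Lemma toK_eq0 (x : D) : (toK x == 0) = (x == 0).
Proof. exact: tofrac_eq0. Qed.

Lemma f_lb (a : D) : a != 0 -> f 1 <= f a.
Proof. by move=> a0; have := hf.1 1 a (oner_neq0 _) a0; rewrite mul1r. Qed.

Lemma f_opp (r : D) : r != 0 -> f (- r) = f r.
Proof.
move=> r0; have m1 : (-1 : D) != 0 by rewrite oppr_eq0 oner_neq0.
apply/eqP; rewrite eq_le; apply/andP; split.
- have := hf.1 (- r) (-1) (ltac:(by rewrite oppr_eq0)) m1.
  by rewrite mulrN1 opprK.
- by have := hf.1 r (-1) r0 m1; rewrite mulrN1.
Qed.

Lemma greedy (n : nat) (a b : D) : a != 0 -> b != 0 -> f a <= f b ->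
  f a - f 1 < n%:Z ->
  exists s : seq D, all (fun d => d != 0) s /\
    toK a / toK b = \sum_(d <- s) (toK d)^-1.
Proof.
elim: n a b => [|n IH] a b a0 b0 fab hn.
  by have := f_lb a0; lia.
have [q [r [hb hr]]] := hf.2 a b a0 b0.
have q0 : q != 0.
  apply/negP => /eqP q0; move: hb; rewrite q0 mulr0 add0r => br.
  case: hr => [r0|]; first by move: b0; rewrite br r0 eqxx.
  by rewrite -br; lia.
have [r0|r0] := eqVneq r 0.
  exists [:: q]; split; first by rewrite /= q0.
  rewrite big_cons big_nil addr0 hb r0 addr0 /toK rmorphM /=.
  rewrite invfM mulrA divff ?mul1r //.
  by rewrite tofrac_eq0.
have {}hr : f r < f a by case: hr => // /eqP; rewrite (negPf r0).
have bq0 : b * q != 0 by rewrite mulf_neq0.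
have [s [hs1 hs2]] : exists s : seq D, all (fun d => d != 0) s /\
    toK (- r) / toK (b * q) = \sum_(d <- s) (toK d)^-1.
  apply: (IH (- r) (b * q)); first by rewrite oppr_eq0.
  - exact: bq0.
  - rewrite f_opp //; have := hf.1 b q b0 q0; lia.
  - rewrite f_opp //; lia.
exists (q :: s); split; first by rewrite /= q0.
rewrite big_cons -hs2 /toK.
have hA : FracField.tofrac a != 0 by rewrite tofrac_eq0.
have hB : FracField.tofrac b != 0 by rewrite tofrac_eq0.
have hQ : FracField.tofrac q != 0 by rewrite tofrac_eq0.
rewrite rmorphN rmorphM /=.
have -> : FracField.tofrac r = FracField.tofrac b - FracField.tofrac a * FracField.tofrac q.
  by rewrite hb rmorphD rmorphM /= addrC addKr.
move: hA hB hQ; generalize (FracField.tofrac a) (FracField.tofrac b) (FracField.tofrac q) => A B Q hA hB hQ.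
rewrite mulNr mulrBl opprB.
have e1 : B / (B * Q) = Q^-1 by rewrite invfM mulrA divff // mul1r.
have e2 : A * Q / (B * Q) = A / B by rewrite invfM mulrACA divff // mulr1.
by rewrite e1 e2 addrC subrK.
Qed.
End A.

Definition valK (D : idomainType) (s : seq D) : {fraction D} := \sum_(d <- s) (toK d)^-1.
Definition nzs (D : idomainType) (s : seq D) := all (fun d => d != 0) s.

Definition egq (E : seq nat) : rat := \sum_(k <- E) (k%:R)^-1.

Lemma fib (p : nat) : forall q M : nat, (0 < q)%N -> (0 < M)%N -> (p * M < q)%N ->
  exists E : seq nat, [/\ uniq E, all (fun k => M < k)%N E &
     (p%:R / q%:R : rat) = egq E].
Proof.
elim/ltn_ind: p => p IH q M q0 M0 hpM.
have [->|p0] := posnP p.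
  by exists [::]; split => //; rewrite mul0r /egq big_nil.
set k0 := ((q.-1) %/ p + 1)%N.
have h1 : (p * (k0 - 1) < q)%N by rewrite /k0; lia.
have h2 : (q <= p * k0)%N by rewrite /k0; lia.
have hk0 : (M < k0)%N by nia.
have hlt : (p * k0 - q < p)%N by lia.
have hq' : (0 < q * k0)%N by nia.
have hpq : (p < q)%N by nia.
have hk2 : ((p * k0 - q) * k0 < q * k0)%N by nia.
have [E [uE aE vE]] := IH _ hlt (q * k0)%N k0 hq' (leq_ltn_trans (leq0n M) hk0) hk2.
exists (k0 :: E); split.
- rewrite /= uE andbT; apply/negP => hin; have := allP aE _ hin; lia.
- rewrite /= hk0 /=; apply/allP => x hx; have := allP aE _ hx; lia.
rewrite /egq big_cons -/(egq E) -vE natrB // !natrM.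
have kq : (k0%:R : rat) != 0 by rewrite pnatr_eq0; lia.
have qq : (q%:R : rat) != 0 by rewrite pnatr_eq0; lia.
field; by rewrite kq qq.
Qed.

Definition Hs (M B : nat) : rat := \sum_(i < B) ((M + 1 + i)%:R)^-1.

Lemma Hs_split M B C : Hs M (B + C) = Hs M B + Hs (M + B) C.
Proof.
rewrite /Hs big_split_ord /=; congr (_ + _); apply: eq_bigr => i _.
by congr ((_)%:R^-1); lia.
Qed.

Lemma Hs_block M B : 1 / 2 <= Hs (M + B) (M + B + 1).
Proof.
set N := (M + B + 1)%N.
have N0 : (0 < N)%N by rewrite /N addn1.
apply: (@le_trans _ _ (\sum_(i < N) ((2 * N)%:R)^-1)).
  rewrite sumr_const card_ord -mulr_natr natrM.
  have nN : (N%:R : rat) != 0 by rewrite pnatr_eq0 -lt0n.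
  rewrite le_eqVlt; apply/orP; left; apply/eqP; field; by rewrite nN.
apply: ler_sum => i _.
rewrite lef_pV2 ?posrE ?ltr0n //; try lia.
  rewrite ler_nat; have := ltn_ord i; rewrite /N; lia.
Qed.

Lemma Hs_ge0 M B : 0 <= Hs M B.
Proof. by apply: sumr_ge0 => i _; rewrite invr_ge0 ler0n. Qed.

Lemma Hs_div M (j : nat) : exists B, (j%:R / 2 : rat) <= Hs M B.
Proof.
elim: j => [|j [B hB]]; first by exists 0%N; rewrite mul0r Hs_ge0.
exists (B + (M + B + 1))%N; rewrite Hs_split.
have := Hs_block M B.
rewrite -[j.+1]addn1 natrD; lra.
Qed.

Lemma harm_greedy (B : nat) : forall M p q : nat, (0 < q)%N ->
  (p%:R / q%:R : rat) <= Hs M B ->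
  exists E : seq nat, [/\ uniq E, all (fun k => M < k)%N E &
     (p%:R / q%:R : rat) = egq E].
Proof.
elim: B => [|B IH] M p q q0 hle.
  have p0 : p = 0%N.
    move: hle; rewrite /Hs big_ord0 => hle.
    have h : (p%:R / q%:R : rat) = 0 by apply/eqP; rewrite eq_le hle divr_ge0 ?ler0n.
    move/eqP: h; rewrite mulf_eq0 invr_eq0 !pnatr_eq0 => /orP [/eqP //|/eqP h]; by rewrite h in q0.
  by exists [::]; split => //; rewrite p0 mul0r /egq big_nil.
have [hlt|hge] := ltnP (p * M.+1)%N q.
  have [E [uE aE vE]] := fib q0 (ltn0Sn M) hlt.
  exists E; split => //; apply/allP => x hx; have := allP aE _ hx; lia.
have hq' : (0 < q * M.+1)%N by nia.
have hle' : ((p * M.+1 - q)%:R / (q * M.+1)%:R : rat) <= Hs M.+1 B.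
  move: hle; rewrite -add1n Hs_split addn1 {1}/Hs big_ord1 natrB // !natrM.
  have kq : (M.+1%:R : rat) != 0 by rewrite pnatr_eq0.
  have qq : (q%:R : rat) != 0 by rewrite pnatr_eq0; lia.
  have -> : (p%:R * M.+1%:R - q%:R) / (q%:R * M.+1%:R) = (p%:R / q%:R : rat) - (M.+1%:R)^-1.
    by field; rewrite nat1r kq qq.
  have -> : ((M + 1 + 0)%:R : rat) = M.+1%:R by rewrite addn0 addn1.
  by rewrite lerBlDl.
have [E [uE aE vE]] := IH M.+1 _ _ hq' hle'.
exists (M.+1 :: E); split.
- rewrite /= uE andbT; apply/negP => hin; have := allP aE _ hin; lia.
- rewrite /= ltnSn /=; apply/allP => x hx; have := allP aE _ hx; lia.
rewrite /egq big_cons -/(egq E) -vE natrB // !natrM.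
have kq : (M.+1%:R : rat) != 0 by rewrite pnatr_eq0.
have qq : (q%:R : rat) != 0 by rewrite pnatr_eq0; lia.
field; by rewrite nat1r kq qq.
Qed.

Lemma ZFpos (p q M : nat) : (0 < q)%N ->
  exists E : seq nat, [/\ uniq E, all (fun k => M < k)%N E &
     (p%:R / q%:R : rat) = egq E].
Proof.
move=> q0; have [B hB] := Hs_div M (2 * p).
apply: (harm_greedy q0); apply: le_trans hB.
rewrite natrM mulrAC divff ?pnatr_eq0 // mul1r.
rewrite ler_pdivrMr ?ltr0n // ler_peMr ?ler0n //.
by rewrite ler1n.
Qed.

Lemma ZF (x : rat) : exists E : seq int,
  [/\ uniq E, all (fun k => k != 0) E & x = \sum_(k <- E) ((k%:~R : rat))^-1].
Proof.
have hd : (0 < `|denq x|)%N by rewrite absz_gt0 denq_neq0.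
have ed : (`|denq x|%:R : rat) = (denq x)%:~R.
  by rewrite -[in RHS](gez0_abs (ltW (denq_gt0 x))).
have [E [uE aE vE]] := ZFpos `|numq x| 0 hd.
have hx : x = (numq x)%:~R / (denq x)%:~R by rewrite divq_num_den.
have [hn|hn] := leP 0 (numq x).
- exists (map (fun k : nat => Posz k) E); split.
  + by rewrite map_inj_uniq // => a b [].
  + by apply/allP => k /mapP [m hm ->]; have := allP aE _ hm; lia.
  rewrite big_map hx -[numq x]gez0_abs // -ed vE /egq.
  by apply: eq_bigr.
- exists (map (fun k : nat => - Posz k) E); split.
  + by rewrite map_inj_uniq // => a b /eqP; rewrite eqr_opp => /eqP [].
  + by apply/allP => k /mapP [m hm ->]; have := allP aE _ hm; lia.
  rewrite big_map hx -[numq x]opprK -[- numq x]gtz0_abs ?oppr_gt0 //.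
  rewrite abszN mulrNz mulNr -ed vE /egq -sumrN; apply: eq_bigr => k _.
  by rewrite mulrNz invrN.
Qed.

Section RatrC0.
Variable F : fieldType.
Hypothesis c0 : forall z : int, z != 0 -> (z%:~R : F) != 0.

Lemma ratrD0 (x y : rat) : ratr (x + y) = ratr x + ratr y :> F.
Proof.
have injZtoQ: @injective rat int intr by apply: intr_inj.
have nz_den z: (denq z)%:~R != 0 :> F by apply: c0; rewrite denq_eq0.
apply: (canLR (mulfK (nz_den _))); apply: (mulIf (nz_den x)).
rewrite /ratr.
rewrite mulrAC mulrDl divfK ?nz_den // mulrAC -!rmorphM.
apply: (mulIf (nz_den y)); rewrite mulrAC mulrDl divfK ?nz_den //.
rewrite -!(rmorphM, rmorphD); congr _%:~R; apply: injZtoQ.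
rewrite !(rmorphM, rmorphD) /= [_ + _]lock /= -lock !numqE.
by rewrite (mulrAC y) -!mulrDl -mulrA mulrAC !mulrA.
Qed.

Lemma ratrM0 (x y : rat) : ratr (x * y) = ratr x * ratr y :> F.
Proof.
have injZtoQ: @injective rat int intr by apply: intr_inj.
have nz_den z: (denq z)%:~R != 0 :> F by apply: c0; rewrite denq_eq0.
rewrite /ratr mulrC mulrAC; apply: canLR (mulKf (nz_den _)) _; rewrite !mulrA.
do 2!apply: canRL (mulfK (nz_den _)) _; rewrite -!rmorphM; congr _%:~R.
apply: injZtoQ; rewrite !rmorphM [x * y]lock /= !numqE -lock.
by rewrite -!mulrA mulrA mulrCA -!mulrA (mulrCA y).
Qed.

Lemma ratr10 : ratr 1 = 1 :> F.
Proof. by rewrite /ratr divr1. Qed.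

Lemma ratr00 : ratr 0 = 0 :> F.
Proof. by rewrite /ratr (_ : numq 0 = 0) // mul0r. Qed.

Lemma ratrV0 (x : rat) : ratr x^-1 = (ratr x)^-1 :> F.
Proof.
have [->|x0] := eqVneq x 0; first by rewrite invr0 ratr00 invr0.
have h : ratr x * ratr x^-1 = 1 :> F by rewrite -ratrM0 divff // ratr10.
have rx : ratr x != 0 :> F by apply/negP => /eqP e; move: h; rewrite e mul0r => /eqP; rewrite eq_sym oner_eq0.
by apply: (mulfI rx); rewrite h divff.
Qed.

Lemma ratr_sumV (E : seq int) :
  ratr (\sum_(k <- E) ((k%:~R : rat))^-1) = \sum_(k <- E) ((k%:~R : F))^-1.
Proof.
elim: E => [|k E IH]; first by rewrite !big_nil ratr00.
by rewrite !big_cons ratrD0 IH ratrV0 ratr_int.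
Qed.

Lemma ratr_frac (m n : int) : ratr (m%:~R / n%:~R) = (m%:~R / n%:~R : F).
Proof. by rewrite ratrM0 ratrV0 !ratr_int. Qed.
End RatrC0.

Section G2.
Variable D : idomainType.
Hypothesis c0 : forall n : nat, (0 < n)%N -> (n%:R : D) != 0.

Lemma c0z (z : int) : z != 0 -> (z%:~R : D) != 0.
Proof.
case: z => n hn.
  by apply: c0; move: hn; rewrite lt0n.
rewrite NegzE mulrNz oppr_eq0; exact: c0.
Qed.

Lemma c0K (z : int) : z != 0 -> (z%:~R : {fraction D}) != 0.
Proof.
move=> z0; have -> : (z%:~R : {fraction D}) = toK (z%:~R) by rewrite /toK rmorph_int.
by rewrite /toK tofrac_eq0 c0z.
Qed.

Definition cl (x y : D) := exists m n : int, [/\ m != 0, n != 0 & x *~ m = y *~ n].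

Lemma cl_refl x : cl x x.
Proof. by exists 1, 1. Qed.

Lemma cl_sym x y : cl x y -> cl y x.
Proof. by move=> [m [n [m0 n0 e]]]; exists n, m. Qed.

Lemma cl_trans x y z : cl x y -> cl y z -> cl x z.
Proof.
move=> [m [n [m0 n0 e]]] [m' [n' [m0' n0' e']]].
exists (m * m'), (n * n'); split; rewrite ?mulf_neq0 //.
rewrite mulrzA e.
have -> : y *~ n *~ m' = y *~ m' *~ n by rewrite -!mulrzA mulrC.
by rewrite e' -mulrzA mulrC.
Qed.

Lemma cl_mul d k : k != 0 -> cl (d *~ k) d.
Proof. by move=> k0; exists 1, k; split. Qed.

Lemma partition_cl (d : D) (t : seq D) : exists t1 t2,
  [/\ perm_eq t (t1 ++ t2), (forall e, e \in t1 -> cl e d) & (forall e, e \in t2 -> ~ cl e d)].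
Proof.
elim: t => [|x t [t1 [t2 [p h1 h2]]]]; first by exists [::], [::].
have [c|nc] := classic (cl x d).
  exists (x :: t1), t2; split => //.
  - by rewrite /= perm_cons.
  by move=> e; rewrite inE => /orP [/eqP ->|]; [exact: c|exact: h1].
exists t1, (x :: t2); split => //.
- by rewrite perm_sym -[t1 ++ x :: t2]/(t1 ++ [:: x] ++ t2) perm_catCA /= perm_cons perm_sym.
by move=> e; rewrite inE => /orP [/eqP ->|]; [exact: nc|exact: h2].
Qed.

Lemma class_val (d : D) (t1 : seq D) : d != 0 -> nzs t1 -> (forall e, e \in t1 -> cl e d) ->
  exists rho : rat, valK t1 = ratr rho / toK d.
Proof.
move=> d0; elim: t1 => [|e t IH] /=.
  by move=> _ _; exists 0; rewrite /valK big_nil ratr00 ?mul0r //; exact: c0K.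
move=> /andP [e0 nt] hc.
have [rho hr] := IH nt (fun x hx => hc x (mem_behead (s := e :: t) hx)).
have [m [n [m0 n0 emn]]] := hc e (mem_head _ _).
exists (m%:~R / n%:~R + rho).
rewrite /valK big_cons -/(valK t) hr (ratrD0 (@c0K)) (ratr_frac (@c0K)).
have E0 : toK e != 0 by rewrite /toK tofrac_eq0.
have D0 : toK d != 0 by rewrite /toK tofrac_eq0.
have mK := c0K m0; have nK := c0K n0.
have eq1 : toK e * m%:~R = toK d * n%:~R.
  by have := congr1 (@toK D) emn; rewrite /toK !rmorphMz !mulrzr.
have -> : toK e = toK d * n%:~R / m%:~R by rewrite -eq1 mulfK.
rewrite mulrDl !invfM invrK; congr (_ + _).
by rewrite mulrC mulrA [RHS]mulrAC.
Qed.

Lemma mem_nzs (s t : seq D) : nzs s -> {subset t <= s} -> nzs t.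
Proof. by move=> ns st; apply/allP => x /st hx; exact: (allP ns x hx). Qed.

Lemma G2 (n : nat) (s : seq D) : (size s < n)%N -> nzs s ->
  exists s', [/\ uniq s', nzs s', valK s' = valK s &
                 forall x, x \in s' -> exists2 y, y \in s & cl x y].
Proof.
elim: n s => // n IH [|d t] hs ns.
  by exists [::]; split.
move: ns => /= /andP [d0 nt].
have [t1 [t2 [p h1 h2]]] := partition_cl d t.
have st1 : {subset t1 <= t} by move=> x hx; rewrite (perm_mem p) mem_cat hx.
have st2 : {subset t2 <= t} by move=> x hx; rewrite (perm_mem p) mem_cat hx orbT.
have hsz : (size t2 < n)%N.
  by move: hs (perm_size p); rewrite size_cat /=; lia.
have [s2 [u2 n2 v2 c2]] := IH t2 hsz (mem_nzs nt st2).
have [rho hr] := class_val d0 (mem_nzs nt st1) h1.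
have [E [uE aE vE]] := ZF (1 + rho).
have hinj : {in E &, injective (fun k => d *~ k)}.
  move=> a b _ _ /eqP; rewrite -subr_eq0 -mulrzBr -mulrzr mulf_eq0 (negPf d0) /=.
  by move=> hab; apply/eqP; rewrite -subr_eq0; move: hab; apply: contraLR; exact: c0z.
exists ([seq d *~ k | k <- E] ++ s2); split.
- rewrite cat_uniq map_inj_in_uniq // uE u2 andbT /=.
  apply/hasP => -[x xs2 /mapP [k kE ek]].
  have [y ys cy] := c2 x xs2.
  apply: (h2 y ys); apply: cl_trans (cl_sym cy) _; rewrite ek; apply: cl_mul.
  exact: (allP aE k kE).
- rewrite /nzs all_cat -/(nzs s2) n2 andbT; apply/allP => x /mapP [k kE ->].
  rewrite -mulrzr mulf_neq0 //; apply: c0z; exact: (allP aE k kE).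
- rewrite /valK big_cat /= -/(valK s2) v2 big_map big_cons -/(valK t).
  have -> : valK t = valK t1 + valK t2 by rewrite /valK (perm_big _ p) big_cat.
  rewrite hr addrA; congr (_ + _).
  have -> : \sum_(k <- E) (toK (d *~ k))^-1 = (toK d)^-1 * \sum_(k <- E) (k%:~R : {fraction D})^-1.
    rewrite mulr_sumr; apply: eq_bigr => k _.
    by rewrite /toK rmorphMz -mulrzr invfM.
  rewrite -(ratr_sumV (@c0K)) -vE (ratrD0 (@c0K)) ratr10 mulrDr mulr1.
  by rewrite mulrC.
- move=> x; rewrite mem_cat => /orP [/mapP [k kE ->]|xs2].
    exists d; first exact: mem_head.
    apply: cl_mul; exact: (allP aE k kE).
  have [y ys cy] := c2 x xs2.
  by exists y => //; rewrite inE st2 ?orbT.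
Qed.
End G2.

Section G1.
Variable D : idomainType.

Hypothesis h2 : (2%:R : D) = 0 \/ (2%:R : D) \is a GRing.unit.

Lemma insert1 (n : nat) (S : seq D) (d : D) : (size S < n)%N -> uniq S -> nzs S -> d != 0 ->
  exists S', [/\ uniq S', nzs S' & valK S' = valK S + (toK d)^-1].
Proof.
elim: n S d => // n IH S d hS uS nS d0.
have [dS|dS] := boolP (d \in S); last first.
  exists (d :: S); split => //=; first by rewrite dS.
  - by rewrite d0.
  - by rewrite /valK big_cons addrC.
have nR : nzs (rem d S).
  by apply/allP => x /mem_rem hx; exact: (allP nS x hx).
have uR : uniq (rem d S) by exact: rem_uniq.
have eS : valK S = (toK d)^-1 + valK (rem d S) by rewrite /valK (big_rem _ dS).
case: h2 => [z2|u2].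
  exists (rem d S); split => //.
  rewrite eS addrAC -mulr2n -mulr_natr.
  have -> : (2%:R : {fraction D}) = toK 2%:R by rewrite /toK rmorph_nat.
  by rewrite z2 /toK rmorph0 mulr0 add0r.
have d'0 : d * (2%:R)^-1 != 0.
  rewrite mulf_neq0 // invr_eq0; apply/negP => /eqP h; move: u2; rewrite h unitr0 //.
have hsz : (size (rem d S) < n)%N.
  have hp : (0 < size S)%N by rewrite -has_predT; apply/hasP; exists d.
  move: hS; rewrite size_rem //; case: (size S) hp => //= m _.
have [S' [uS' nS' vS']] := IH (rem d S) (d * (2%:R)^-1) hsz uR nR d'0.
exists S'; split => //.
rewrite vS' eS /toK rmorphM rmorphV //= rmorph_nat invfM invrK.
by rewrite mulr_natr mulr2n [RHS]addrAC [RHS]addrC.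
Qed.

Lemma G1 (s : seq D) : nzs s -> exists s', [/\ uniq s', nzs s' & valK s' = valK s].
Proof.
elim: s => [|d t IH] /=; first by exists [::].
move=> /andP [d0 nt].
have [t' [ut nt' vt]] := IH nt.
have [S' [uS nS vS]] := insert1 (ltnSn (size t')) ut nt' d0.
exists S'; split => //.
by rewrite vS vt /valK big_cons addrC.
Qed.
End G1.


Section Final.
Variable D : idomainType.

Lemma G_all (s : seq D) : nzs s -> exists s', [/\ uniq s', nzs s' & valK s' = valK s].
Proof.
move=> ns.
have [h2|h2] := classic ((2%:R : D) = 0 \/ (2%:R : D) \is a GRing.unit).
  exact: G1.
have c0 : forall n : nat, (0 < n)%N -> (n%:R : D) != 0.
  move=> n; elim/ltn_ind: n => n IH n0; apply/negP => /eqP hn.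
  have e := odd_double_half n; move: e.
  case: (odd n) => /= e.
  - apply: h2; right; apply/unitrP; exists (n./2.+1%:R).
    have h1 : (2%:R * n./2.+1%:R : D) = 1.
      rewrite -natrM (_ : (2 * n./2.+1 = n + 1)%N); last by move: e; rewrite -!muln2; lia.
      by rewrite natrD hn add0r.
    by split; rewrite // mulrC.
  - have h0 : (0 < n./2 < n)%N by move: e; rewrite -!muln2; lia.
    have := IH n./2 (proj2 (andP h0)) (proj1 (andP h0)); apply/negP; rewrite negbK.
    have : (2%:R * n./2%:R : D) = 0.
      by rewrite -natrM -hn; congr (_%:R); move: e; rewrite -!muln2; lia.
    move/eqP; rewrite mulf_eq0 => /orP [h|//].
    by exfalso; apply: h2; left; apply/eqP.
have [s' [u n' v _]] := G2 c0 (ltnSn (size s)) ns.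
by exists s'.
Qed.

End Final.

Theorem theorem2p7 (D : idomainType) :
  (euclidean_domain D -> bonaccian D) /\
  (forall f : D -> int, euclidean_fun f ->
     forall a b : D, a != 0 -> b != 0 -> f a <= f b ->
       egyptian (toK a / toK b)).
Proof.
have part2 : forall f : D -> int, euclidean_fun f ->
     forall a b : D, a != 0 -> b != 0 -> f a <= f b ->
       egyptian (toK a / toK b).
  move=> f hf a b a0 b0 fab.
  have hm : (f a - f 1 < Posz (absz (f a - f 1)%R).+1)%R by have := @f_lb _ f hf a a0; lia.
  have [s [ns vs]] := greedy hf a0 b0 fab hm.
  have [s' [u n' v]] := G_all ns.
  by exists s'; split => //; split => //; rewrite vs; symmetry; exact: v.
split => //.
move=> [f hf] x x0.
have [n [d [d0 ex]]] := frac_rep x.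
have n0 : n != 0.
  apply/negP => /eqP n0; move: x0; rewrite ex n0 /toK rmorph0 mul0r eqxx //.
case: (boolP (f n <= f d)) => h.
  by left; rewrite ex; exact: (part2 f hf n d n0 d0 h).
right; rewrite ex invf_div; apply: (part2 f hf d n d0 n0).
by move: h; rewrite -ltNge => /ltW.
Qed.
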